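(* Let $c,k>0$ and let $U$ be a function assignment for $\mathbb{N}^k$. Suppose that for every $p>0$ there exist a finite $A\subseteq\mathbb{N}^k$ and $E\subseteq\mathbb{N}$ with $|E|=p$ and $E^k\subseteq A$ such that $U(A)$ has at most $c$ regressive values on $E^k$. Then for every $p>0$ there exist a finite $A\subseteq\mathbb{N}^k$ and $E\subseteq\mathbb{N}$ with $|E|=p$ and $E^k\subseteq A$ such that $U(A)$ has at most $\mathrm{ot}(k)$ regressive values on $E^k$ (in particular at most $k^k$).
   Context: $\mathbb{N}=\{0,1,\dots\}$; for $x\in\mathbb{N}^k$, $\min(x)$ and $|x|$ are its least and greatest coordinates. A function assignment for $\mathbb{N}^k$ assigns to each finite $A\subseteq\mathbb{N}^k$ a function $U(A):A\to A$. $y$ is a regressive value of $F$ on $B$ iff $y=F(x)$ for some $x\in B$ with $|y|<\min(x)$. $x,y\in\mathbb{N}^k$ have the same order type iff $x_i<x_j\Leftrightarrow y_i<y_j$ for all $i,j$; $\mathrm{ot}(k)$ is the number of order types of elements of $\mathbb{N}^k$ (and $\mathrm{ot}(k)\le k^k$). *)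

(* Defs.v *)
From mathcomp Require Import all_boot all_order.
From mathcomp Require Import finmap.
From mathcomp Require Import boolp.
Set Implicit Arguments. Unset Strict Implicit. Unset Printing Implicit Defensive.
Local Open Scope fset_scope.

Notation pt k := (k.-tuple nat).

(* |x| : greatest coordinate; min(x) : least coordinate (k > 0 in use). *)
Definition tmax k (x : pt k) : nat := \max_(i < k) tnth x i.
Definition tmin k (x : pt k) : nat := \big[minn/head 0 x]_(i <- x) i.

(* A function assignment for N^k: to each finite A ⊆ N^k a map U(A) : A -> A.
   Encoded as U : {fset pt k} -> pt k -> pt k with U A mapping A into A
   (values outside A are irrelevant). *)
Definition function_assignment k (U : {fset pt k} -> pt k -> pt k) : Prop :=
  forall (A : {fset pt k}) (x : pt k), x \in A -> U A x \in A.

Definition in_cube k (E : {fset nat}) (x : pt k) : bool := all (fun e => e \in E) x.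

Definition cube_sub k (E : {fset nat}) (A : {fset pt k}) : Prop :=
  forall x : pt k, in_cube E x -> x \in A.

(* The set of regressive values of F on E^k (for E^k ⊆ A, where F = U(A)):
   y = F x with x ∈ E^k and |y| < min(x). *)
Definition regressive_values k (F : pt k -> pt k) (A : {fset pt k})
    (E : {fset nat}) : {fset pt k} :=
  [fset F x | x in A & in_cube E x && (tmax (F x) < tmin x)].

(* Order types: x, y have the same order type iff x_i < x_j <-> y_i < y_j.
   An order type is thus determined by the relation (i,j) |-> (x_i < x_j);
   ot(k) is the number of such relations realized by some x ∈ N^k. *)
Definition order_pattern k (x : pt k) : {ffun 'I_k * 'I_k -> bool} :=
  [ffun ij => tnth x ij.1 < tnth x ij.2].

Definition ot (k : nat) : nat :=
  #|[set r : {ffun 'I_k * 'I_k -> bool} | `[< exists x : pt k, order_pattern x = r >] ]|.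

(* Main.v *)
Require Import Defs.
From mathcomp Require Import all_boot all_order.
Set Implicit Arguments. Unset Strict Implicit. Unset Printing Implicit Defensive.

Lemma cnt k (B : pred 'I_k) : #|[set j | B j]| = count B (enum 'I_k).
Proof.
rewrite cardsE cardE /enum_mem size_filter count_filter; apply: eq_count => j.
by rewrite /= andbT.
Qed.

Definition sigma k (r : {ffun 'I_k * 'I_k -> bool}) (i : 'I_k) : nat :=
  #|[set j : 'I_k | [forall l : 'I_k, (l < j) ==> (r (l,j) || r (j,l))] && r (j,i)]|.

Lemma nth_count (S : seq nat) v : sorted ltn S -> v \in S ->
  nth 0 S (count (fun w => w < v) S) = v.
Proof.
elim: S => [|a S IH] //= Hs; rewrite inE.
have Hall : all (fun w => a < w) S.
  by apply: (order_path_min ltn_trans); exact: Hs.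
case: eqP => [->|Hne] /= Hv.
  rewrite ltnn /=; have -> : count (fun w => w < a) S = 0.
    apply/eqP; rewrite -leqn0 leqNgt -has_count; apply/hasP => -[w /(allP Hall) Hw].
    by rewrite ltnNge ltnW.
  by [].
have Hav : a < v by apply: (allP Hall).
rewrite Hav /= IH //; exact: path_sorted Hs.
Qed.

Lemma key k (x : k.-tuple nat) (S : seq nat) : sorted ltn S -> S =i x ->
  forall i, sigma (order_pattern x) i < size S /\ nth 0 S (sigma (order_pattern x) i) = tnth x i.
Proof.
move=> HS HSx i.
set P := fun j : 'I_k => [forall l : 'I_k, (l < j) ==> ((tnth x l < tnth x j) || (tnth x j < tnth x l))].
set V := map (tnth x) [seq j <- enum 'I_k | P j].
have HV : uniq V.
  rewrite map_inj_in_uniq; first by apply: filter_uniq; apply: enum_uniq.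
  move=> j1 j2.
  rewrite !mem_filter => /andP[P1 _] /andP[P2 _] Heq.
  apply/val_inj => /=; case: (ltngtP j1 j2) => // H.
  - by move/forallP: P2 => /(_ j1); rewrite H /= Heq ltnn.
  - by move/forallP: P1 => /(_ j2); rewrite H /= Heq ltnn.
have HVx : V =i x.
  move=> v; apply/idP/idP.
    by case/mapP => j _ ->; apply: mem_tnth.
  move=> Hv; have Hi : index v x < k by rewrite -{2}(size_tuple x) index_mem.
  have Hj : tnth x (Ordinal Hi) = v by rewrite (tnth_nth 0) /= nth_index.
  apply/mapP; exists (Ordinal Hi) => //; rewrite mem_filter mem_enum andbT.
  apply/forallP => l; apply/implyP => Hl; rewrite Hj -neq_ltn.
  rewrite (tnth_nth 0); have := before_find 0 Hl; by rewrite /= => ->.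
have Hperm : perm_eq S V.
  apply: uniq_perm => //; first by rewrite ltn_sorted_uniq_leq in HS; case/andP: HS.
  by move=> v; rewrite HSx HVx.
have -> : sigma (order_pattern x) i = count (fun w => w < tnth x i) S.
  rewrite ((permP Hperm) _) count_map count_filter /sigma cnt.
  apply: eq_count => j /=; rewrite !ffunE /= andbC; congr (_ && _).
  by apply: eq_forallb => l; rewrite !ffunE.
have Hin : tnth x i \in S by rewrite HSx mem_tnth.
split; last by apply: nth_count.
rewrite ltn_neqAle count_size andbT; apply/negP => /eqP Heq.
have := all_count (fun w => w < tnth x i) S; rewrite Heq eqxx => /allP /(_ _ Hin).
by rewrite ltnn.
Qed.
Section Ramsey.
Variable C : finType.

Fixpoint good k (f : seq nat -> C) (ch : seq (nat * C)) : Prop :=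
  match ch with
  | [::] => True
  | a :: ch' => (forall t, subseq t (map fst ch') -> size t = k -> f (a.1 :: t) = a.2)
                /\ good k f ch'
  end.

Lemma good_subseq k f ch1 ch2 : subseq ch1 ch2 -> good k f ch2 -> good k f ch1.
Proof.
elim: ch2 ch1 => [|b ch2 IH] [|a ch1] //=.
case: eqP => [<-|_] Hs [H1 H2].
  split; last exact: IH.
  move=> t Ht; apply: H1; apply: subseq_trans Ht _; exact: map_subseq.
have := IH _ Hs H2; by [].
Qed.

Lemma good_hom k f col ch : good k f ch -> all (fun a => a.2 == col) ch ->
  forall t, subseq t (map fst ch) -> size t = k.+1 -> f t = col.
Proof.
elim: ch => [|a ch IH] /= Hg Ha [|y t] //=; case: Hg => H1 H2; case/andP: Ha => /eqP Hc Ha.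
case: eqP => [->|_] Hs Hsz.
  by rewrite -Hc; apply: H1 => //; case: Hsz.
exact: IH.
Qed.

Lemma pigeon (f : seq nat -> C) (ch : seq (nat * C)) p :
  #|C| * p <= size ch -> exists col, p <= count (fun a => a.2 == col) ch.
Proof.
have Hs : \sum_(c : C) count (fun a => a.2 == c) ch = size ch.
  elim: ch => [|a ch IH] /=; first by rewrite big1.
  rewrite big_split /= IH (bigD1 a.2) //= eqxx big1 // => c /negPf.
  by rewrite eq_sym => ->.
move=> Hle; case: p Hle => [|p] Hle; first by exists (f [::]).
have [col Hc|Hn] := pickP (fun col => p < count (fun a => a.2 == col) ch).
  by exists col.
exfalso.
have Hc0 : 0 < #|C| by apply/card_gt0P; exists (f [::]).
have : size ch <= #|C| * p.
  rewrite -Hs -sum_nat_const; apply: leq_sum => c _.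
  by have := Hn c; rewrite /= ltnNge => /negbFE.
rewrite leqNgt => /negP; apply; apply: leq_trans Hle.
by rewrite ltn_pmul2l.
Qed.

Definition homog (f : seq nat -> C) k (h : seq nat) :=
  exists col, forall t, subseq t h -> size t = k -> f t = col.

Definition ramsey_prop k := forall p, exists N, forall s : seq nat, N <= size s ->
  forall f : seq nat -> C, exists h, [/\ subseq h s, size h = p & homog f k h].

Lemma chain k : ramsey_prop k -> forall m, exists L, forall s : seq nat, L <= size s ->
  forall f : seq nat -> C, exists ch, [/\ subseq (map fst ch) s, size ch = m & good k f ch].
Proof.
move=> Hk; elim=> [|m IHm].
  by exists 0 => s _ f; exists [::]; split => //; apply: sub0seq.
case: IHm => L HL; case: (Hk L) => N HN; exists N.+1 => [[|a s]] //= Hs f.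
case: (HN s Hs (fun t => f (a :: t))) => h [Hhs Hhz [col Hcol]].
case: (HL h (eq_leq (esym Hhz)) f) => ch [Hch Hchz Hg].
exists ((a, col) :: ch); split => /=.
- by rewrite eqxx; apply: subseq_trans Hch Hhs.
- by rewrite Hchz.
- split => // t Ht; apply: Hcol; apply: subseq_trans Ht Hch.
Qed.

Lemma ramsey k : ramsey_prop k.
Proof.
elim: k => [|k IHk] p.
  exists p => s Hs f; exists (take p s); split.
  - exact: take_subseq.
  - by rewrite size_take; case: ltngtP Hs => // ->.
  - by exists (f [::]) => -[].
case: (chain IHk (#|C| * p)) => L HL; exists L => s Hs f.
case: (HL s Hs f) => ch [Hch Hchz Hg].
case: (pigeon f (eq_leq (esym Hchz))) => col Hcol.
set ch' := take p [seq a <- ch | a.2 == col].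
have Hsub : subseq ch' ch by apply: subseq_trans (take_subseq _ _) (filter_subseq _ _).
exists (map fst ch'); split.
- apply: subseq_trans Hch; exact: map_subseq.
- by rewrite size_map size_take size_filter; case: ltngtP Hcol => // ->.
- exists col; apply: good_hom; first exact: good_subseq Hg.
  apply/allP => a /(mem_subseq (take_subseq _ _)).
  by rewrite mem_filter => /andP[].
Qed.
End Ramsey.
From mathcomp Require Import finmap boolp.
Local Open Scope fset_scope.

Theorem lemma3p12 (c k : nat) (U : {fset (k.-tuple nat)} -> k.-tuple nat -> k.-tuple nat) :
  0 < c -> 0 < k -> function_assignment U ->
  (forall p : nat, 0 < p ->
     exists (A : {fset (k.-tuple nat)}) (E : {fset nat}),
       #|` E| = p /\ cube_sub E A /\ #|` regressive_values (U A) A E| <= c) ->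
  forall p : nat, 0 < p ->
     exists (A : {fset (k.-tuple nat)}) (E : {fset nat}),
       #|` E| = p /\ cube_sub E A /\ #|` regressive_values (U A) A E| <= ot k.
Proof.
move=> Hc Hk HU Hyp p Hp.
pose C := {ffun {ffun 'I_k * 'I_k -> bool} -> 'I_(c.+2)}.
case: (@ramsey C k (p + k)%N) => N HN.
case: (Hyp N.+1 isT) => A [E [HE [HAE HR]]].
pose F := U A.
pose RV := regressive_values F A E.
pose g (x : k.-tuple nat) := if in_cube E x && (tmax (F x) < tmin x)
   then (index (F x) (enum_fset RV)).+1 else 0.
pose f (T : seq nat) : C := [ffun r => inord (g [tuple nth 0 T (sigma r i) | i < k])].
pose s := sort leq (enum_fset E).
have Hsu : uniq s by rewrite sort_uniq fset_uniq.
have Hss : sorted ltn s by rewrite ltn_sorted_uniq_leq Hsu sort_sorted //; apply: leq_total.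
have Hsz : N <= size s.
  by rewrite size_sort HE.
case: (HN s Hsz f) => h [Hhs Hhz [col Hcol]].
have Hhsort : sorted ltn h by apply: subseq_sorted Hhs Hss; apply: ltn_trans.
have Hhu : uniq h by apply: subseq_uniq Hsu.
pose E' := [fset v in take p h].
have HE'E : forall v, v \in E' -> v \in E.
  move=> v; rewrite inE /= => /(mem_subseq (take_subseq _ _)) /(mem_subseq Hhs).
  by rewrite mem_sort.
have Hcube : forall x : k.-tuple nat, in_cube E' x -> in_cube E x.
  by move=> x /allP Hx; apply/allP => v /Hx; apply: HE'E.
have Hgc : forall x, g x < c.+2.
  move=> x; rewrite /g; case: ifP => // _; rewrite ltnS.
  by apply: leq_trans (index_size _ _) HR.
have Hg : forall x : k.-tuple nat, in_cube E' x -> g x = col (order_pattern x).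
  move=> x Hx.
  pose S := [seq v <- take p h | v \in x].
  have HSx : S =i x.
    move=> v; rewrite mem_filter; case Hv: (v \in x) => //=.
    by have := allP Hx v Hv; rewrite inE.
  have HSs : sorted ltn S.
    apply: sorted_filter; first exact: ltn_trans.
    by apply: subseq_sorted (take_subseq _ _) Hhsort; apply: ltn_trans.
  have HSk : size S <= k.
    rewrite -(size_tuple x); apply: uniq_leq_size.
      by apply: filter_uniq; apply: subseq_uniq (take_subseq _ _) Hhu.
    by move=> v; rewrite HSx.
  pose T := S ++ drop (size S) (drop p h).
  have HTs : subseq T h.
    rewrite -[h in subseq _ h](cat_take_drop p h); apply: cat_subseq.
      exact: filter_subseq.
    exact: drop_subseq.
  have HTz : size T = k.
    by rewrite size_cat !size_drop Hhz addKn subnKC.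
  rewrite -(Hcol T HTs HTz) /f ffunE.
  have -> : [tuple nth 0 T (sigma (order_pattern x) i) | i < k] = x.
    apply: eq_from_tnth => i; rewrite tnth_mktuple nth_cat.
    by case: (key HSs HSx i) => Hlt Hn; rewrite Hlt Hn.
  by rewrite inordK.
exists A, E'; split.
  rewrite card_fseq undup_id; last by apply: subseq_uniq (take_subseq _ _) Hhu.
  by rewrite size_takel // Hhz leq_addr.
split; first by move=> x /Hcube; apply: HAE.
pose P := [set r : {ffun 'I_k * 'I_k -> bool} | `[< exists x : k.-tuple nat, order_pattern x = r >] ].
pose L := [seq x <- enum_fset A | in_cube E' x && (tmax (F x) < tmin x)].
pose x0 := [tuple 0 | _ < k].
pose G r := F (nth x0 [seq x <- L | order_pattern x == r] 0).
have Hsub : regressive_values (U A) A E' `<=` [fset y in map G (enum P)].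
  apply/fsubsetP => y /imfsetP [x /= Hx ->].
  move: Hx; rewrite inE /= => /andP[HxA /andP[Hx1 Hx2]].
  rewrite inE; apply/mapP; exists (order_pattern x).
    by rewrite mem_enum inE; apply/asboolP; exists x.
  rewrite /G; set l := [seq _ <- L | _].
  have Hxl : x \in l by rewrite mem_filter eqxx /= mem_filter Hx1 Hx2.
  have : nth x0 l 0 \in l by rewrite mem_nth // lt0n size_eq0; apply/eqP => Hl; rewrite Hl in Hxl.
  set x' := nth x0 l 0; rewrite mem_filter => /andP[/eqP Hpat].
  rewrite mem_filter => /andP[/andP[Hx'1 Hx'2] Hx'A].
  have Hgeq : g x = g x' by rewrite !Hg // Hpat.
  move: Hgeq; rewrite /g (Hcube _ Hx1) (Hcube _ Hx'1) Hx2 Hx'2 /= => -[Hi].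
  have HFx : F x \in RV.
    by apply/imfsetP; exists x => //=; rewrite inE /= HxA (Hcube _ Hx1) Hx2.
  have HFx' : F x' \in RV by rewrite -index_mem -Hi index_mem.
  by rewrite -[LHS](nth_index (F x) HFx) Hi (nth_index _ HFx').
rewrite (leq_trans (fsubset_leq_card Hsub)) // card_fseq (leq_trans (size_undup _)) //.
by rewrite size_map -cardE.
Qed.
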